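(* Let $\alpha,\beta\ge1$. (i) For every $2\times2$ matrix $A$ with strictly positive entries and $R(A)=\alpha$, there exists a $2\times 2$ matrix $B$ with strictly positive entries and $R(B)=\beta$ such that $R(AB)=\Phi(\alpha,\beta)$. (ii) For every $2\times2$ matrix $B$ with strictly positive entries and $R(B)=\beta$, there exists a $2\times2$ matrix $A$ with strictly positive entries and $R(A)=\alpha$ such that $R(AB)=\Phi(\alpha,\beta)$.
   Context: For a $2\times2$ matrix $A=(a_{ij})$ with strictly positive entries, $F(A)=\frac{a_{11}a_{22}}{a_{12}a_{21}}$ and the distortion is $R(A)=\max\{F(A),1/F(A)\}$. The envelope function is $\Phi(\alpha,\beta)=\left(\frac{1+\sqrt{\alpha\beta}}{\sqrt{\alpha}+\sqrt{\beta}}\right)^2$. *)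

(* Defs.v *)
From mathcomp Require Import all_boot all_order all_algebra.
From mathcomp Require Import reals.
Set Implicit Arguments. Unset Strict Implicit. Unset Printing Implicit Defensive.
Import Order.TTheory GRing.Theory Num.Theory.
Local Open Scope ring_scope.

Section Distortion.
Variable R : realType.

Definition posmx (A : 'M[R]_2) : Prop := forall i j : 'I_2, 0 < A i j.

Definition Fcr (A : 'M[R]_2) : R :=
  (A 0 0 * A 1 1) / (A 0 1 * A 1 0).

Definition distortion (A : 'M[R]_2) : R := Num.max (Fcr A) (Fcr A)^-1.

Definition Phi (a b : R) : R :=
  ((1 + Num.sqrt (a * b)) / (Num.sqrt a + Num.sqrt b)) ^+ 2.
End Distortion.

(* Main.v *)
Require Import Defs.
From mathcomp Require Import all_boot all_order all_algebra.
From mathcomp Require Import reals.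
From mathcomp Require Import ring lra.
Import Order.TTheory GRing.Theory Num.Theory.
Local Open Scope ring_scope.

Set Implicit Arguments. Unset Strict Implicit.
Section Aux.
Variable R : realType.

Definition mk2 (x y z w : R) : 'M[R]_2 :=
  \matrix_(i < 2, j < 2) if i == 0 then (if j == 0 then x else y)
                         else (if j == 0 then z else w).

Lemma mk2E00 x y z w : mk2 x y z w 0 0 = x. Proof. by rewrite mxE. Qed.
Lemma mk2E01 x y z w : mk2 x y z w 0 1 = y. Proof. by rewrite mxE. Qed.
Lemma mk2E10 x y z w : mk2 x y z w 1 0 = z. Proof. by rewrite mxE. Qed.
Lemma mk2E11 x y z w : mk2 x y z w 1 1 = w. Proof. by rewrite mxE. Qed.

Lemma mk2_pos x y z w : 0 < x -> 0 < y -> 0 < z -> 0 < w -> posmx (mk2 x y z w).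
Proof.
move=> hx hy hz hw i j; rewrite mxE.
by case: (i == 0); case: (j == 0).
Qed.

Lemma mul2E (A B : 'M[R]_2) i j : (A *m B) i j = A i 0 * B 0 j + A i 1 * B 1 j.
Proof.
rewrite mxE !big_ord_recl big_ord0 addr0.
have -> : lift ord0 (ord0 : 'I_1) = 1 by apply/val_inj.
by [].
Qed.

Lemma dist_cases (A : 'M[R]_2) alpha : posmx A -> 1 <= alpha ->
  distortion A = alpha ->
  Fcr A = alpha \/ Fcr A = alpha^-1.
Proof.
move=> hA ha; rewrite /distortion maxEle; case: ifP => _ h.
  by right; rewrite -h invrK.
by left.
Qed.

Lemma dist_ge1 (M : 'M[R]_2) f : Fcr M = f -> 1 <= f -> distortion M = f.
Proof.
move=> hF hf; rewrite /distortion hF max_l //.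
have f0 : 0 < f by apply: lt_le_trans ltr01 hf.
by apply: (le_trans _ hf); rewrite invf_le1.
Qed.

Lemma dist_inv (M : 'M[R]_2) f : Fcr M = f^-1 -> 1 <= f -> distortion M = f.
Proof.
move=> hF hf; rewrite /distortion hF invrK max_r //.
have f0 : 0 < f by apply: lt_le_trans ltr01 hf.
by apply: (le_trans _ hf); rewrite invf_le1.
Qed.

Lemma Phi_eq (a b : R) : 1 <= a -> 1 <= b ->
  Phi (a ^+ 2) (b ^+ 2) = ((1 + a * b) / (a + b)) ^+ 2.
Proof.
move=> ha hb; rewrite /Phi -exprMn !sqrtr_sqr !ger0_norm //; nra.
Qed.

Lemma Phi_ge1 (a b : R) : 1 <= a -> 1 <= b -> 1 <= ((1 + a * b) / (a + b)) ^+ 2.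
Proof.
move=> ha hb; apply: exprn_ege1.
rewrite ler_pdivlMr; last lra.
rewrite mul1r; nra.
Qed.

End Aux.

Ltac pos := repeat match goal with
  | |- is_true (0 < _ + _) => apply: addr_gt0
  | |- is_true (0 < _^-1) => rewrite invr_gt0
  | |- is_true (0 < _ * _) => apply: mulr_gt0
  | |- is_true (0 < _ ^+ _) => apply: exprn_gt0
  | |- is_true (0 < _ / _) => apply: divr_gt0
  | |- is_true (0 < 1) => exact: ltr01
  end; try done.
Ltac nz := repeat (apply/andP; split); try done; apply: lt0r_neq0; pos.

Theorem mainTheorem3 (R : realType) (alpha beta : R) :
  1 <= alpha -> 1 <= beta ->
  (forall A : 'M[R]_2, posmx A -> distortion A = alpha ->
     exists B : 'M[R]_2, [/\ posmx B, distortion B = beta &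
                            distortion (A *m B) = Phi alpha beta]) /\
  (forall B : 'M[R]_2, posmx B -> distortion B = beta ->
     exists A : 'M[R]_2, [/\ posmx A, distortion A = alpha &
                            distortion (A *m B) = Phi alpha beta]).
Proof.
move=> ha hb.
set a := Num.sqrt alpha; set b := Num.sqrt beta.
have ea : alpha = a ^+ 2 by rewrite sqr_sqrtr //; lra.
have eb : beta = b ^+ 2 by rewrite sqr_sqrtr //; lra.
have a1 : 1 <= a by rewrite -sqrtr1 ler_sqrt //; lra.
have b1 : 1 <= b by rewrite -sqrtr1 ler_sqrt //; lra.
have a0 : a != 0 by apply/eqP; lra.
have b0 : b != 0 by apply/eqP; lra.
have ha0 : 0 < a by lra.
have hb0 : 0 < b by lra.
have ab0 : a + b != 0 by apply/eqP; lra.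
have ab1 : 1 + a * b != 0 by apply/eqP; nra.
clearbody a b; subst alpha beta; rewrite Phi_eq //.
have Hg := Phi_ge1 a1 b1.
split=> M hM hd.
- have p0 := hM 0 0; have q0 := hM 0 1; have r0 := hM 1 0; have s0 := hM 1 1.
  have p0' : M 0 0 != 0 by apply: lt0r_neq0.
  have q0' : M 0 1 != 0 by apply: lt0r_neq0.
  have r0' : M 1 0 != 0 by apply: lt0r_neq0.
  case: (dist_cases hM ha hd); rewrite /Fcr => hF.
  + have hs : M 1 1 = a^+2 * M 0 1 * M 1 0 / M 0 0.
      by rewrite -hF; field; rewrite p0' q0' r0'.
    exists (mk2 (b * a / M 0 0) (a / M 0 0) (1 / M 0 1) (b / M 0 1)); split.
    * apply: mk2_pos; apply: divr_gt0 => //; nra.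
    * apply: dist_ge1; last by rewrite exprn_ege1.
      rewrite /Fcr mk2E00 mk2E01 mk2E10 mk2E11; field; nz.
    * apply: dist_ge1 => //.
      rewrite /Fcr !mul2E !(mk2E00, mk2E01, mk2E10, mk2E11) hs; field; nz.
  + have hs : M 1 1 = M 0 1 * M 1 0 / (a^+2 * M 0 0).
      by rewrite -[a^+2]invrK -hF; field; nz.
    exists (mk2 (1 / M 0 0) (b / M 0 0) (a * b / M 0 1) (a / M 0 1)); split.
    * apply: mk2_pos; pos.
    * apply: dist_inv => //.
      rewrite /Fcr mk2E00 mk2E01 mk2E10 mk2E11; field; nz.
    * apply: dist_ge1 => //.
      rewrite /Fcr !mul2E !(mk2E00, mk2E01, mk2E10, mk2E11) hs; field; nz.
- have p0 := hM 0 0; have q0 := hM 0 1; have r0 := hM 1 0; have s0 := hM 1 1.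
  have p0' : M 0 0 != 0 by apply: lt0r_neq0.
  have q0' : M 0 1 != 0 by apply: lt0r_neq0.
  have r0' : M 1 0 != 0 by apply: lt0r_neq0.
  case: (dist_cases hM hb hd); rewrite /Fcr => hF.
  + have hs : M 1 1 = b^+2 * M 0 1 * M 1 0 / M 0 0.
      by rewrite -hF; field; nz.
    exists (mk2 (a * b / M 0 0) (1 / M 1 0) (b / M 0 0) (a / M 1 0)); split.
    * apply: mk2_pos; pos.
    * apply: dist_ge1; last by rewrite exprn_ege1.
      rewrite /Fcr mk2E00 mk2E01 mk2E10 mk2E11; field; nz.
    * apply: dist_ge1 => //.
      rewrite /Fcr !mul2E !(mk2E00, mk2E01, mk2E10, mk2E11) hs; field; nz.
  + have hs : M 1 1 = M 0 1 * M 1 0 / (b^+2 * M 0 0).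
      by rewrite -[b^+2]invrK -hF; field; nz.
    exists (mk2 (1 / M 0 0) (a * b / M 1 0) (a / M 0 0) (b / M 1 0)); split.
    * apply: mk2_pos; pos.
    * apply: dist_inv => //.
      rewrite /Fcr mk2E00 mk2E01 mk2E10 mk2E11; field; nz.
    * apply: dist_ge1 => //.
      rewrite /Fcr !mul2E !(mk2E00, mk2E01, mk2E10, mk2E11) hs; field; nz.
Qed.
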